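(* Let $m,n\ge2$, let $\mathcal D$ be an $m\times n$ domino diagram, and consider the associated set of generalized domino states in $\mathbb C^m\otimes\mathbb C^n$ (with any choice of the nonzero constants $\alpha_r,\beta_c$). Suppose the graphs of these product states satisfy $G_A=\overline{G_B}$. If $\mathcal D$ contains a vertical domino of length at least $2$, then the states are not perfectly distinguishable by one-way LOCC with Alice measuring first; and if $\mathcal D$ contains a horizontal domino of length at least $2$, then they are not perfectly distinguishable by one-way LOCC with Bob measuring first.
   Context: An $m\times n$ chessboard has squares indexed by $\mathbb Z_m\times\mathbb Z_n$ and is regarded as a torus. A horizontal domino is a set of squares $(r,b+1),\dots,(r,b+s)$ (column indices mod $n$), a vertical domino is a set $(b+1,c),\dots,(b+s,c)$ (row indices mod $m$); $s$ is its length. An $m\times n$ domino diagram is a partition of the squares into dominoes. With $\{|0\rangle,\dots,|m-1\rangle\}$ and $\{|0\rangle,\dots,|n-1\rangle\}$ the standard bases of $\mathbb C^m$ (Alice) and $\mathbb C^n$ (Bob), fix a nonzero complex number $\alpha_r$ for each row $r$ and $\beta_c$ for each column $c$. The generalized domino states are obtained by assigning to each square a state: if square $(r,b+j)$, $1\le j\le s$, lies in a horizontal domino occupying $(r,b+1),\dots,(r,b+s)$, it is assigned $\sum_{k=1}^s\alpha_r^k\omega^{jk}|r\rangle\otimes|b+k\rangle$ with $\omega=e^{2\pi i/s}$; if square $(b+j,c)$ lies in a vertical domino occupying $(b+1,c),\dots,(b+s,c)$, it is assigned $\sum_{k=1}^s\beta_c^k\omega^{jk}|b+k\rangle\otimes|c\rangle$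 with $\omega=e^{2\pi i/s}$. For product states $|\psi_v^A\rangle\otimes|\psi_v^B\rangle$, $G_A$ is the graph on the index set with an edge $\{u,v\}$ ($u\ne v$) iff $\langle\psi_u^A|\psi_v^A\rangle\ne0$, $G_B$ likewise with Bob's vectors, and $\overline{G}$ is the complement. One-way LOCC with Alice first: there exist positive semidefinite $Q_1,\dots,Q_N$ on Alice's space with $\sum_jQ_j=I$ and, for each $j$, positive semidefinite $R^{(j)}_1,\dots$ on Bob's space summing to $I$ (one for each state) such that $\langle\psi_l|Q_j\otimes R^{(j)}_k|\psi_l\rangle=0$ for all $j$ and $k\ne l$; with Bob first, the same with the roles of the two factors exchanged. *)

(* Defs.v *)
From HB Require Import structures.
From mathcomp Require Import all_boot all_order all_algebra.
Set Implicit Arguments. Unset Strict Implicit. Unset Printing Implicit Defensive.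
Import Order.TTheory GRing.Theory Num.Theory.

Section Domino.
Variable C : numClosedFieldType.
Local Open Scope ring_scope.

Definition adj {p q : nat} (A : 'M[C]_(p, q)) : 'M[C]_(q, p) :=
  (map_mx Num.conj A)^T.

Definition ip {p : nat} (u v : 'cV[C]_p) : C := (adj u *m v) 0 0.

Definition psd {p : nat} (A : 'M[C]_p) : Prop :=
  adj A = A /\ forall v : 'cV[C]_p, 0 <= (adj v *m A *m v) 0 0.

(* Kronecker (tensor) product, with C^p (x) C^q identified with C^(p*q)
   through mxvec_index (i, j) |-> index of |i> (x) |j>. *)
Definition kron {p1 q1 p2 q2 : nat} (A : 'M[C]_(p1, q1)) (B : 'M[C]_(p2, q2))
  : 'M[C]_(p1 * p2, q1 * q2) :=
  \matrix_(i, j) \sum_(i1 < p1) \sum_(i2 < p2) \sum_(j1 < q1) \sum_(j2 < q2)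
     (((i == mxvec_index i1 i2) && (j == mxvec_index j1 j2))%:R
        * A i1 j1 * B i2 j2).

Definition expect {p : nat} (psi : 'cV[C]_p) (X : 'M[C]_p) : C :=
  (adj psi *m X *m psi) 0 0.

(* omega_s = e^{2 pi i / s}: s.-root (-1) is e^{i pi / s} (minimal argument) *)
Definition omega (s : nat) : C := (s.-root (-1)) ^+ 2.

Definition ket {p : nat} (i : 'I_p) : 'cV[C]_p := \col_(k < p) (k == i)%:R.

End Domino.

(* Dom true r b s : horizontal domino (r,b+1),...,(r,b+s) (columns mod n);
   Dom false c b s : vertical domino (b+1,c),...,(b+s,c) (rows mod m). *)
Inductive domino := Dom of bool & nat & nat & nat.

Definition dhoriz (d : domino) := let: Dom h _ _ _ := d in h.
Definition dline (d : domino) := let: Dom _ l _ _ := d in l.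
Definition dstart (d : domino) := let: Dom _ _ b _ := d in b.
Definition dlen (d : domino) := let: Dom _ _ _ s := d in s.

Definition valid_domino (m n : nat) (d : domino) : bool :=
  if dhoriz d then [&& dline d < m, dstart d < n, 0 < dlen d & dlen d <= n]%N
  else [&& dline d < n, dstart d < m, 0 < dlen d & dlen d <= m]%N.

Definition dom_mem (m n : nat) (d : domino) (x : 'I_m * 'I_n) : bool :=
  if dhoriz d then
    (x.1 == dline d :> nat) &&
    has (fun k => (dstart d + k.+1) %% n == x.2) (iota 0 (dlen d))
  else
    (x.2 == dline d :> nat) &&
    has (fun k => (dstart d + k.+1) %% m == x.1) (iota 0 (dlen d)).

Definition domino_diagram (m n : nat) (D : seq domino) : Prop :=
  all (valid_domino m n) D /\
  forall x : 'I_m * 'I_n, (count (fun d => dom_mem d x) D = 1)%N.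

Definition domino_of (m n : nat) (D : seq domino) (x : 'I_m * 'I_n) : domino :=
  nth (Dom true 0 0 0) D (find (fun d => dom_mem d x) D).

(* the position j (1 <= j <= s) of square x inside its domino *)
Definition pos_in (m n : nat) (d : domino) (x : 'I_m * 'I_n) : nat :=
  if dhoriz d then
    (find (fun k => (dstart d + k.+1) %% n == x.2) (iota 0 (dlen d))).+1
  else
    (find (fun k => (dstart d + k.+1) %% m == x.1) (iota 0 (dlen d))).+1.

Section States.
Variable C : numClosedFieldType.
Local Open Scope ring_scope.

Definition stateA (m n : nat) (alpha : 'I_m -> C) (beta : 'I_n -> C)
  (D : seq domino) (x : 'I_m * 'I_n) : 'cV[C]_m :=
  let d := domino_of D x in
  let j := pos_in d x in
  let s := dlen d in
  if dhoriz d then ket C x.1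
  else \col_(r < m)
        \sum_(k < s | ((dstart d + k.+1) %% m)%N == r)
           beta x.2 ^+ k.+1 * omega C s ^+ (j * k.+1).

Definition stateB (m n : nat) (alpha : 'I_m -> C) (beta : 'I_n -> C)
  (D : seq domino) (x : 'I_m * 'I_n) : 'cV[C]_n :=
  let d := domino_of D x in
  let j := pos_in d x in
  let s := dlen d in
  if dhoriz d then
    \col_(c < n)
        \sum_(k < s | ((dstart d + k.+1) %% n)%N == c)
           alpha x.1 ^+ k.+1 * omega C s ^+ (j * k.+1)
  else ket C x.2.

Definition state (m n : nat) (alpha : 'I_m -> C) (beta : 'I_n -> C)
  (D : seq domino) (x : 'I_m * 'I_n) : 'cV[C]_(m * n) :=
  kron (stateA alpha beta D x) (stateB alpha beta D x).

Definition GA_eq_compl_GB {I : finType} {p q : nat}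
  (a : I -> 'cV[C]_p) (b : I -> 'cV[C]_q) : Prop :=
  forall u v : I, u != v -> (ip (a u) (a v) != 0) = (ip (b u) (b v) == 0).

Definition oneway_LOCC_A {I : finType} {p q : nat}
  (psi : I -> 'cV[C]_(p * q)) : Prop :=
  exists (N : nat) (Q : 'I_N -> 'M[C]_p) (R : 'I_N -> I -> 'M[C]_q),
    (forall j, psd (Q j)) /\ \sum_(j < N) Q j = 1%:M /\
    (forall j k, psd (R j k)) /\ (forall j, \sum_(k : I) R j k = 1%:M) /\
    forall j (k l : I), k != l -> expect (psi l) (kron (Q j) (R j k)) = 0.

Definition oneway_LOCC_B {I : finType} {p q : nat}
  (psi : I -> 'cV[C]_(p * q)) : Prop :=
  exists (N : nat) (Q : 'I_N -> 'M[C]_q) (R : 'I_N -> I -> 'M[C]_p),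
    (forall j, psd (Q j)) /\ \sum_(j < N) Q j = 1%:M /\
    (forall j k, psd (R j k)) /\ (forall j, \sum_(k : I) R j k = 1%:M) /\
    forall j (k l : I), k != l -> expect (psi l) (kron (R j k) (Q j)) = 0.

End States.

(* Main.v *)
Require Import Defs.
From HB Require Import structures.
From mathcomp Require Import all_boot all_order all_algebra.
From mathcomp Require Import ring zify.
Set Implicit Arguments. Unset Strict Implicit. Unset Printing Implicit Defensive.
Import Order.TTheory GRing.Theory Num.Theory.
Local Open Scope ring_scope.
Section LA.
Variable C : numClosedFieldType.

Lemma adjE p q (A : 'M[C]_(p,q)) i j : adj A i j = (A j i)^*.
Proof. by rewrite /adj !mxE. Qed.

Lemma adjK p q (A : 'M[C]_(p,q)) : adj (adj A) = A.
Proof. by apply/matrixP => i j; rewrite !adjE conjCK. Qed.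

Lemma adjM p q r (A : 'M[C]_(p,q)) (B : 'M[C]_(q,r)) : adj (A *m B) = adj B *m adj A.
Proof.
apply/matrixP => i j; rewrite adjE !mxE rmorph_sum; apply: eq_bigr => k _.
by rewrite !adjE rmorphM mulrC.
Qed.

Lemma adjD p q (A B : 'M[C]_(p,q)) : adj (A + B) = adj A + adj B.
Proof. by apply/matrixP => i j; rewrite /adj !mxE rmorphD. Qed.

Lemma adjZ p q a (A : 'M[C]_(p,q)) : adj (a *: A) = a^* *: adj A.
Proof. by apply/matrixP => i j; rewrite /adj !mxE rmorphM. Qed.

Lemma ipE p (u v : 'cV[C]_p) : ip u v = \sum_i (u i 0)^* * v i 0.
Proof. by rewrite /ip !mxE; apply: eq_bigr => i _; rewrite adjE. Qed.

Lemma ipC p (u v : 'cV[C]_p) : ip v u = (ip u v)^*.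
Proof. rewrite !ipE rmorph_sum; apply: eq_bigr => i _. by rewrite rmorphM /= conjCK mulrC. Qed.

Lemma ipDr p (u v w : 'cV[C]_p) : ip u (v + w) = ip u v + ip u w.
Proof. by rewrite !ipE -big_split; apply: eq_bigr => i _; rewrite mxE mulrDr. Qed.

Lemma ipZr p a (u v : 'cV[C]_p) : ip u (a *: v) = a * ip u v.
Proof. rewrite !ipE mulr_sumr; apply: eq_bigr => i _; rewrite mxE; ring. Qed.

Lemma ipDl p (u v w : 'cV[C]_p) : ip (v + w) u = ip v u + ip w u.
Proof. by rewrite ipC ipDr rmorphD /= -!ipC. Qed.

Lemma ipZl p a (u v : 'cV[C]_p) : ip (a *: v) u = a^* * ip v u.
Proof. by rewrite ipC ipZr rmorphM /= -ipC. Qed.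

Lemma ipsum_r p (I : finType) (u : 'cV[C]_p) (F : I -> 'cV[C]_p) :
  ip u (\sum_i F i) = \sum_i ip u (F i).
Proof.
rewrite ipE; under eq_bigr do rewrite summxE mulr_sumr.
rewrite exchange_big; apply: eq_bigr => i _; by rewrite ipE.
Qed.

Lemma ip_ge0 p (v : 'cV[C]_p) : 0 <= ip v v.
Proof. rewrite ipE; apply: sumr_ge0 => i _; rewrite mulrC; exact: mul_conjC_ge0. Qed.

Lemma ip_eq0 p (v : 'cV[C]_p) : (ip v v == 0) = (v == 0).
Proof.
apply/idP/idP; last by move/eqP->; rewrite ipE big1 // => i _; rewrite mxE mulr0.
rewrite ipE psumr_eq0 => [/allP H|i _]; last by rewrite mulrC mul_conjC_ge0.
apply/eqP/matrixP => i j; rewrite (ord1 j) mxE.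
by have := H i (mem_index_enum i); rewrite mulrC mul_conjC_eq0 => /eqP.
Qed.

Lemma ip_mulr p q (A : 'M[C]_(p,q)) u v : ip u (A *m v) = ip (adj A *m u) v.
Proof. by rewrite /ip adjM adjK mulmxA. Qed.

Lemma expectE p (v : 'cV[C]_p) A : expect v A = ip v (A *m v).
Proof. by rewrite /expect /ip mulmxA. Qed.

Lemma psd_ge0 p (A : 'M[C]_p) v : psd A -> 0 <= ip v (A *m v).
Proof. by case=> _ /(_ v); rewrite -expectE. Qed.

Lemma psd_herm p (A : 'M[C]_p) u v : psd A -> ip u (A *m v) = ip (A *m u) v.
Proof. by case=> h _; rewrite ip_mulr h. Qed.

Lemma psd_ker p (A : 'M[C]_p) v : psd A -> ip v (A *m v) = 0 -> A *m v = 0.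
Proof.
move=> hA h0; set w := A *m v.
set z := ip w w; set c := ip w (A *m w).
have z0 : 0 <= z by exact: ip_ge0.
have c0 : 0 <= c by exact: psd_ge0.
have c1 : 0 < c + 1 by rewrite ltr_wpDl.
set s := z / (c + 1).
have sr : s^* = s by apply: geC0_conj; rewrite divr_ge0 // ltW.
have E : ip (v - s *: w) (A *m (v - s *: w)) = - (s * z) - s * z + s * s * c.
  rewrite mulmxBr -scalemxAr -/w -!scaleNr ipDr !ipDl !ipZr !ipZl h0.
  rewrite (psd_herm v w hA) -/w -/z -/c rmorphN /= sr; ring.
have := psd_ge0 (v - s *: w) hA; rewrite E => H.
have E2 : (c + 1) ^+ 2 * (- (s * z) - s * z + s * s * c) = - (z ^+ 2 * (c + 2)).
  rewrite /s. field. by rewrite lt0r_neq0.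
have : 0 <= - (z ^+ 2 * (c + 2)).
  by rewrite -E2 mulr_ge0 // exprn_ge0 // ltW.
rewrite oppr_ge0 => H2.
have : z ^+ 2 * (c + 2) = 0.
  apply/eqP; rewrite eq_le H2 mulr_ge0 ?exprn_ge0 //.
  by rewrite addr_ge0.
move/eqP; rewrite mulf_eq0 expf_eq0 /= => /orP[/eqP zz|].
  by apply/eqP; rewrite -ip_eq0 -/z zz.
move=> /eqP c2; exfalso.
have : 0 < c + 2 by rewrite ltr_wpDl.
by rewrite c2 ltxx.
Qed.


Lemma resolve p (h : 'I_p -> 'cV[C]_p) :
  (forall i, h i != 0) -> (forall i j, i != j -> ip (h i) (h j) = 0) ->
  forall u, u = \sum_i (ip (h i) u / ip (h i) (h i)) *: h i.
Proof.
move=> hnz horth u.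
pose F : 'M[C]_p := \matrix_(k, i) h i k 0.
pose G : 'M[C]_p := \matrix_(i, k) ((ip (h i) (h i))^-1 * (h i k 0)^*).
have GF : G *m F = 1%:M.
  apply/matrixP => i j; rewrite !mxE.
  have -> : \sum_k G i k * F k j = (ip (h i) (h i))^-1 * ip (h i) (h j).
    rewrite [ip (h i) (h j)]ipE mulr_sumr; apply: eq_bigr => k _; rewrite !mxE; ring.
  case: (eqVneq i j) => [<-|ne]; first by rewrite mulVf // ip_eq0.
  by rewrite (horth i j ne) mulr0.
have FG := mulmx1C GF.
rewrite {1}(_ : u = F *m (G *m u)); last by rewrite mulmxA FG mul1mx.
apply/matrixP => k z; rewrite (ord1 z) [LHS]mxE summxE; apply: eq_bigr => i _.
rewrite [in RHS]mxE [F k i]mxE mulrC; congr (_ * _).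
rewrite [LHS]mxE [ip (h i) u]ipE mulr_suml; apply: eq_bigr => l _; rewrite mxE; ring.
Qed.

Lemma mxvec_index_eq p q (i i' : 'I_p) (j j' : 'I_q) :
  (mxvec_index i j == mxvec_index i' j') = (i == i') && (j == j').
Proof.
rewrite /mxvec_index (inj_eq (@cast_ord_inj _ _ _)) (inj_eq enum_rank_inj).
by rewrite xpair_eqE.
Qed.

Lemma sum_only (I : finType) (i0 : I) (F : I -> C) :
  (forall i, i != i0 -> F i = 0) -> \sum_i F i = F i0.
Proof. by move=> h; rewrite (bigD1 i0) //= big1 ?addr0. Qed.

Lemma kronE p1 q1 p2 q2 (A : 'M[C]_(p1,q1)) (B : 'M[C]_(p2,q2)) i1 i2 j1 j2 :
  kron A B (mxvec_index i1 i2) (mxvec_index j1 j2) = A i1 j1 * B i2 j2.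
Proof.
rewrite mxE (@sum_only _ i1); last first.
  move=> a /negbTE ha; do 3 (rewrite big1 // => ? _).
  by rewrite mxvec_index_eq [i1 == _]eq_sym ha /= !mul0r.
rewrite (@sum_only _ i2); last first.
  move=> a /negbTE ha; do 2 (rewrite big1 // => ? _).
  by rewrite mxvec_index_eq [i2 == _]eq_sym ha andbF /= !mul0r.
rewrite (@sum_only _ j1); last first.
  move=> a /negbTE ha; do 1 (rewrite big1 // => ? _).
  by rewrite [mxvec_index j1 j2 == _]mxvec_index_eq [j1 == _]eq_sym ha !andbF /= !mul0r.
rewrite (@sum_only _ j2); last first.
  move=> a /negbTE ha.
  by rewrite [mxvec_index j1 j2 == _]mxvec_index_eq [j2 == _]eq_sym ha !andbF /= !mul0r.
by rewrite !eqxx mul1r.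
Qed.

Lemma expect_sum p (w : 'cV[C]_p) M :
  expect w M = \sum_i \sum_j (w i 0)^* * M i j * w j 0.
Proof.
rewrite /expect !mxE; under eq_bigr do rewrite !mxE mulr_suml.
rewrite exchange_big; apply: eq_bigr => i _; apply: eq_bigr => j _; by rewrite adjE.
Qed.

Lemma ord11 (z : 'I_(1*1)) : z = mxvec_index 0 0.
Proof.
case: (mxvec_index _ _) => k hk; case: z => z hz; apply/val_inj => /=.
by move: hk hz; rewrite !ltnS !leqn0 => /eqP -> /eqP ->.
Qed.

Lemma sum_mxvec p q (F : 'I_(p*q) -> C) :
  \sum_k F k = \sum_i \sum_j F (mxvec_index i j).
Proof.
rewrite (reindex (uncurry (@mxvec_index p q))) /=; last first.
  by case: (@curry_mxvec_bij p q) => g h1 h2; exists g => x _; [apply: h1|apply: h2].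
by rewrite pair_big /=; apply: eq_bigr => -[i j].
Qed.

Lemma kronE0 p q (u : 'cV[C]_p) (v : 'cV[C]_q) i1 i2 :
  kron u v (mxvec_index i1 i2) 0 = u i1 0 * v i2 0.
Proof. by rewrite {1}(ord11 0) kronE. Qed.

Lemma expect_kron p q (u : 'cV[C]_p) (v : 'cV[C]_q) X Y :
  expect (kron u v) (kron X Y) = expect u X * expect v Y.
Proof.
rewrite !expect_sum sum_mxvec mulr_suml; apply: eq_bigr => i1 _.
rewrite mulr_suml.
transitivity (\sum_i2 \sum_j1 \sum_j2
   (u i1 0 * v i2 0)^* * (X i1 j1 * Y i2 j2) * (u j1 0 * v j2 0)).
  apply: eq_bigr => i2 _; rewrite sum_mxvec; apply: eq_bigr => j1 _.
  by apply: eq_bigr => j2 _; rewrite !kronE0 kronE.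
rewrite exchange_big; apply: eq_bigr => j1 _ /=.
rewrite mulr_sumr; apply: eq_bigr => i2 _.
rewrite mulr_sumr; apply: eq_bigr => j2 _; rewrite rmorphM /=; ring.
Qed.

End LA.

Section Abs.
Variable C : numClosedFieldType.
Variable I : finType.
Variables p q : nat.

Definition LOCCabs (a : I -> 'cV[C]_p) (b : I -> 'cV[C]_q) :=
  exists N (Q : 'I_N -> 'M[C]_p) (R : 'I_N -> I -> 'M[C]_q),
    (forall j, psd (Q j)) /\ \sum_(j < N) Q j = 1%:M /\
    (forall j k, psd (R j k)) /\ (forall j, \sum_k R j k = 1%:M) /\
    forall j (k l : I), k != l -> expect (a l) (Q j) * expect (b l) (R j k) = 0.

Lemma expect_sumM r (v : 'cV[C]_r) (J : finType) (M : J -> 'M[C]_r) :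
  expect v (\sum_j M j) = \sum_j expect v (M j).
Proof.
rewrite expectE mulmx_suml ipsum_r; apply: eq_bigr => j _; by rewrite expectE.
Qed.

Lemma expect0 r (v : 'cV[C]_r) M : psd M -> expect v M = 0 -> M *m v = 0.
Proof. by rewrite expectE => h; apply: psd_ker. Qed.

Lemma ip0r r (v : 'cV[C]_r) : ip v 0 = 0.
Proof. by rewrite ipE big1 // => i _; rewrite mxE mulr0. Qed.

Lemma actP (R : I -> 'M[C]_q) (b : I -> 'cV[C]_q) (l l' : I) :
  (forall k, psd (R k)) -> \sum_k R k = 1%:M -> l != l' ->
  (forall k, k != l -> expect (b l) (R k) = 0) ->
  expect (b l') (R l) = 0 -> ip (b l) (b l') = 0.
Proof.
move=> hR hs ne hl hl'.
have Rl : R l *m b l = b l.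
  rewrite -{2}(mul1mx (b l)) -hs mulmx_suml (bigD1 l) //= big1 ?addr0 // => k hk.
  by apply: expect0 => //; apply: hl.
have Rl' : R l *m b l' = 0 by apply: expect0.
by rewrite -Rl -psd_herm // Rl' ip0r.
Qed.


Lemma ip_neq0C r (u v : 'cV[C]_r) : (ip u v != 0) = (ip v u != 0).
Proof. by rewrite [ip v u]ipC conjC_eq0. Qed.

Lemma abstract_main (a : I -> 'cV[C]_p) (b : I -> 'cV[C]_q)
  (H : forall u v, u != v -> (ip (a u) (a v) != 0) = (ip (b u) (b v) == 0))
  (f g : 'I_p -> I) (finj : injective f) (ginj : injective g)
  (fo : forall i i', i != i' -> ip (a (f i)) (a (f i')) = 0)
  (go : forall i i', i != i' -> ip (a (g i)) (a (g i')) = 0)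
  (anz : forall x, a x != 0) (i1 : 'I_p) (x2 : I)
  (x12 : f i1 != x2) (hb : b (f i1) = b x2)
  (hbb : ip (b (f i1)) (b (f i1)) != 0)
  (fb : forall i, i != i1 -> ip (b (f i)) (b (f i1)) != 0)
  (gne : forall i, (g i != f i1) && (g i != x2)) :
  ~ LOCCabs a b.
Proof.
set x1 := f i1.
have ipa12 : ip (a x1) (a x2) = 0.
  by apply/eqP; move: (H _ _ x12); rewrite -hb (negPf hbb) => /negbFE.
case=> N [Q [R [hQ [sQ [hR [sR hL]]]]]].
have [j hj] : exists j, expect (a x1) (Q j) != 0.
  apply/existsP; apply: contraT; rewrite negb_exists => /forallP h0.
  have : expect (a x1) (\sum_j Q j) = 0.
    by rewrite expect_sumM big1 // => j _; apply/eqP; rewrite -[_ == _]negbK h0.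
  by rewrite sQ expectE mul1mx => /eqP; rewrite ip_eq0 (negPf (anz _)).
pose act z := expect (a z) (Q j) != 0.
have hP : forall l l', l != l' -> act l -> act l' -> ip (b l) (b l') = 0.
  move=> l l' ne al al'; apply: (actP (R := R j)) => //.
    move=> k hk; apply/eqP; move: (hL j k l hk); move/eqP; rewrite mulf_eq0.
    by rewrite (negPf al).
  apply/eqP; move: (hL j l l' ne); move/eqP; rewrite mulf_eq0.
  by rewrite (negPf al').
have hiii : forall i, i != i1 -> Q j *m a (f i) = 0.
  move=> i ne; apply: expect0 => //; apply/eqP; apply: contraT => ai.
  have : ip (b (f i)) (b x1) = 0.
    by apply: hP => //; rewrite (inj_eq finj).
  by move/eqP; rewrite (negPf (fb i ne)).
have hfo : forall i i', i != i' -> ip (a (f i)) (a (f i')) = 0 := fo.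
have hiv : forall z, ip (a x1) (a z) != 0 -> act z.
  move=> z hz; apply: contraT; rewrite negbK => /eqP hz0.
  have E := resolve (h := fun i => a (f i)) (fun i => anz _) hfo (a z).
  have : Q j *m a z = (ip (a x1) (a z) / ip (a x1) (a x1)) *: (Q j *m a x1).
    rewrite {1}E mulmx_sumr (bigD1 i1) //= big1 ?addr0; first by rewrite -scalemxAr.
    by move=> i hi; rewrite -scalemxAr hiii // scaler0.
  rewrite (expect0 (hQ j) hz0) => /esym/eqP; rewrite scaler_eq0 mulf_eq0 invr_eq0.
  rewrite (negPf hz) ip_eq0 (negPf (anz _)) /= => /eqP hq.
  by move: hj; rewrite expectE hq ip0r eqxx.
have E := resolve (h := fun i => a (g i)) (fun i => anz _) go (a x1).
set d := fun i => ip (a (g i)) (a x1) / ip (a (g i)) (a (g i)).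
have dE : forall i, (d i != 0) = (ip (a (g i)) (a x1) != 0).
  by move=> i; rewrite /d mulf_eq0 invr_eq0 ip_eq0 (negPf (anz _)) orbF.
case: (boolP [exists i, exists i', (i != i') && (d i != 0) && (d i' != 0)]).
  case/existsP => i /existsP [i' /andP [/andP [ne di] di']].
  have ai : act (g i) by apply: hiv; rewrite ip_neq0C -dE.
  have ai' : act (g i') by apply: hiv; rewrite ip_neq0C -dE.
  have nei : g i != g i' by rewrite (inj_eq ginj).
  have := H _ _ nei; rewrite (hP _ _ nei ai ai') eqxx (go i i' ne) eqxx //.
rewrite negb_exists => /forallP hno.
have [i0 hi0] : exists i0, d i0 != 0.
  apply/existsP; apply: contraT; rewrite negb_exists => /forallP h0.
  move: (anz x1); rewrite E big1 ?eqxx // => i _.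
  by move: (h0 i); rewrite negbK /d /= => /eqP ->; rewrite scale0r.
have E1 : a x1 = d i0 *: a (g i0).
  rewrite E (bigD1 i0) //= big1 ?addr0 // => i hi.
  move: (hno i); rewrite negb_exists => /forallP /(_ i0).
  by rewrite hi hi0 andbT /= negbK /d /= => /eqP ->; rewrite scale0r.
case/andP: (gne i0) => ne1 ne2.
case: (eqVneq (ip (b (g i0)) (b x1)) 0) => hb0.
  move: (H _ _ ne2); rewrite -hb hb0 eqxx.
  by rewrite -[a x2]/(a x2) => h; move: ipa12; rewrite E1 ipZl => /eqP; rewrite mulf_eq0 conjC_eq0 (negPf hi0) (negPf h).
move: (H _ _ ne1); rewrite (negPf hb0) -dE (negPf hi0) //.
Qed.

End Abs.



Definition dom_enc (d : domino) := let: Dom h l b s := d in (h, l, b, s).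
Definition dom_dec (t : bool * nat * nat * nat) := let: (h, l, b, s) := t in Dom h l b s.
Lemma dom_encK : cancel dom_enc dom_dec. Proof. by case. Qed.
HB.instance Definition _ := Equality.copy domino (can_type dom_encK).

Section Dom.
Variables m n : nat.
Variable D : seq domino.
Hypothesis hD : domino_diagram m n D.

Lemma dom_of_mem (x : 'I_m * 'I_n) :
  dom_mem (domino_of D x) x /\ domino_of D x \in D.
Proof.
case: hD => _ /(_ x) hc.
have hh : has (fun d => dom_mem d x) D by rewrite has_count hc.
split; first exact: (nth_find _ hh).
by apply: mem_nth; rewrite -has_find.
Qed.

Lemma dom_uniq (x : 'I_m * 'I_n) d : d \in D -> dom_mem d x -> domino_of D x = d.
Proof.
move=> dD dm; case: (dom_of_mem x) => dm' dD'.
case: hD => _ /(_ x); rewrite -size_filter.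
have h1 : d \in filter (fun d => dom_mem d x) D by rewrite mem_filter dm dD.
have h2 : domino_of D x \in filter (fun d => dom_mem d x) D by rewrite mem_filter dm' dD'.
move: h1 h2; case: (filter _ D) => [|y [|]] //=.
by rewrite !inE => /eqP -> /eqP ->.
Qed.

Lemma dom_valid (x : 'I_m * 'I_n) : valid_domino m n (domino_of D x).
Proof. by case: hD => /allP h _; apply: h; case: (dom_of_mem x). Qed.

End Dom.

Section St.
Variable C : numClosedFieldType.
Variables m n : nat.
Variable D : seq domino.
Hypothesis hD : domino_diagram m n D.
Variables (alpha : 'I_m -> C) (beta : 'I_n -> C).
Hypotheses (halpha : forall r, alpha r != 0) (hbeta : forall c, beta c != 0).
Hypothesis hG : GA_eq_compl_GB (stateA alpha beta D) (stateB alpha beta D).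

Lemma ketE p (j i : 'I_p) : ket C j i 0 = (i == j)%:R.
Proof. by rewrite mxE. Qed.

Lemma ip_ket p (j : 'I_p) : ip (ket C j) (ket C j) = 1.
Proof.
rewrite ipE (bigD1 j) //= big1 ?addr0; first by rewrite !ketE eqxx rmorph1 mulr1.
by move=> i /negPf hi; rewrite !ketE hi mulr0.
Qed.

Lemma ip_ketr p (u : 'cV[C]_p) j : ip u (ket C j) = (u j 0)^*.
Proof.
rewrite ipE (bigD1 j) //= big1 ?addr0; first by rewrite !ketE eqxx mulr1.
by move=> i /negPf hi; rewrite !ketE hi mulr0.
Qed.

Lemma omega_neq0 s : (0 < s)%N -> omega C s != 0.
Proof. by move=> hs; rewrite /omega expf_eq0 rootC_eq0 // oppr_eq0 oner_eq0 andbF. Qed.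

Lemma stateA_h x : dhoriz (domino_of D x) -> stateA alpha beta D x = ket C x.1.
Proof. by rewrite /stateA => ->. Qed.

Lemma stateA_v x i : ~~ dhoriz (domino_of D x) -> stateA alpha beta D x i 0 =
  \sum_(k < dlen (domino_of D x) | ((dstart (domino_of D x) + k.+1) %% m)%N == i)
     beta x.2 ^+ k.+1 * omega C (dlen (domino_of D x)) ^+ (pos_in (domino_of D x) x * k.+1).
Proof. by rewrite /stateA => /negPf ->; rewrite mxE. Qed.

Lemma stateB_v x : ~~ dhoriz (domino_of D x) -> stateB alpha beta D x = ket C x.2.
Proof. by rewrite /stateB => /negPf ->. Qed.

Lemma stateB_h x j : dhoriz (domino_of D x) -> stateB alpha beta D x j 0 =
  \sum_(k < dlen (domino_of D x) | ((dstart (domino_of D x) + k.+1) %% n)%N == j)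
     alpha x.1 ^+ k.+1 * omega C (dlen (domino_of D x)) ^+ (pos_in (domino_of D x) x * k.+1).
Proof. by rewrite /stateB => ->; rewrite mxE. Qed.

Lemma mod_uniq M st s (k k0 : nat) : (k < s)%N -> (k0 < s)%N -> (s <= M)%N ->
  ((st + k.+1) %% M == (st + k0.+1) %% M)%N = (k == k0).
Proof.
move=> hk hk0 hs; rewrite -!addSnnS eqn_modDl !modn_small //.
  exact: leq_trans hk0 hs.
exact: leq_trans hk hs.
Qed.

Lemma suppA (r i : 'I_m) (c : 'I_n) : stateA alpha beta D (r, c) i 0 != 0 ->
  domino_of D (i, c) = domino_of D (r, c).
Proof.
set d := domino_of D (r, c).
case: (boolP (dhoriz d)) => h.
  rewrite stateA_h // ketE /=; case: (eqVneq i r) => [-> //|ne].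
  by rewrite eqxx.
rewrite stateA_v // => hs.
case: (boolP [exists k : 'I_(dlen d), ((dstart d + k.+1) %% m)%N == i]); last first.
  rewrite negb_exists => /forallP hn; move: hs; rewrite big_pred0 ?eqxx //.
  by move=> k; apply/negbTE; exact: hn.
case/existsP => k hk.
case: (dom_of_mem hD (r, c)) => dm dD.
apply: (dom_uniq hD dD).
move: dm; rewrite /dom_mem -/d (negPf h) /= => /andP [hc _].
rewrite hc /=; apply/hasP; exists (val k) => //.
by rewrite mem_iota /= add0n ltn_ord.
Qed.

Lemma nzA (x : 'I_m * 'I_n) : stateA alpha beta D x x.1 0 != 0.
Proof.
set d := domino_of D x.
case: (boolP (dhoriz d)) => h.
  by rewrite stateA_h // ketE eqxx oner_eq0.
rewrite stateA_v //.
case: (dom_of_mem hD x) => dm _.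
have hv := dom_valid hD x; move: hv; rewrite /valid_domino -/d (negPf h) => /and4P [_ _ hs0 hsm].
move: dm; rewrite /dom_mem -/d (negPf h) /= => /andP [_ /hasP [k0 hk0 hp]].
move: hk0; rewrite mem_iota add0n /= => hk0.
rewrite (big_pred1 (Ordinal hk0)) /=.
  by rewrite mulf_neq0 // expf_neq0 // omega_neq0.
move=> k /=; rewrite -(eqP hp) (@mod_uniq _ _ (dlen d)) //.
Qed.


Lemma suppB (r : 'I_m) (c j : 'I_n) : stateB alpha beta D (r, c) j 0 != 0 ->
  domino_of D (r, j) = domino_of D (r, c).
Proof.
set d := domino_of D (r, c).
case: (boolP (dhoriz d)) => h; last first.
  rewrite stateB_v // ketE /=; case: (eqVneq j c) => [-> //|ne].
  by rewrite eqxx.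
rewrite stateB_h // => hs.
case: (boolP [exists k : 'I_(dlen d), ((dstart d + k.+1) %% n)%N == j]); last first.
  rewrite negb_exists => /forallP hn; move: hs; rewrite big_pred0 ?eqxx //.
  by move=> k; apply/negbTE; exact: hn.
case/existsP => k hk.
case: (dom_of_mem hD (r, c)) => dm dD.
apply: (dom_uniq hD dD).
move: dm; rewrite /dom_mem -/d h /= => /andP [hc _].
rewrite hc /=; apply/hasP; exists (val k) => //.
by rewrite mem_iota /= add0n ltn_ord.
Qed.

Lemma nzB (x : 'I_m * 'I_n) : stateB alpha beta D x x.2 0 != 0.
Proof.
set d := domino_of D x.
case: (boolP (dhoriz d)) => h; last first.
  by rewrite stateB_v // ketE eqxx oner_eq0.
rewrite stateB_h //.
case: (dom_of_mem hD x) => dm _.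
have hv := dom_valid hD x; move: hv; rewrite /valid_domino -/d h => /and4P [_ _ hs0 hsm].
move: dm; rewrite /dom_mem -/d h /= => /andP [_ /hasP [k0 hk0 hp]].
move: hk0; rewrite mem_iota add0n /= => hk0.
rewrite (big_pred1 (Ordinal hk0)) /=.
  by rewrite mulf_neq0 // expf_neq0 // omega_neq0.
move=> k /=; rewrite -(eqP hp) (@mod_uniq _ _ (dlen d)) //.
Qed.

Lemma orthoA (r r' : 'I_m) (c : 'I_n) : r != r' ->
  ip (stateA alpha beta D (r, c)) (stateA alpha beta D (r', c)) = 0.
Proof.
move=> ne.
set dx := domino_of D (r, c); set dy := domino_of D (r', c).
have ne2 : (r, c) != (r', c) by rewrite xpair_eqE eqxx andbT.
case: (boolP ((dx == dy) && ~~ dhoriz dx)).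
  case/andP => /eqP e hv.
  have hv' : ~~ dhoriz dy by rewrite -e.
  move: (hG ne2); rewrite (stateB_v hv) (stateB_v hv') /= ip_ket oner_eq0.
  by move/negbFE/eqP.
move=> hno; rewrite ipE big1 // => i _.
apply/eqP; rewrite mulf_eq0 conjC_eq0; apply/contraT; rewrite negb_or => /andP [h1 h2].
have e1 := suppA h1; have e2 := suppA h2.
have exy : dx = dy by rewrite /dx /dy -e1 -e2.
move: hno; rewrite exy eqxx /= negbK => hh.
have hx : dhoriz (domino_of D (r, c)) by rewrite -/dx exy.
move: h1 h2; rewrite (stateA_h hx) (stateA_h hh).
rewrite !ketE /=; case: (eqVneq i r) => [->|]; last by rewrite eqxx.
by rewrite (negPf ne) eqxx.
Qed.

Lemma orthoB (r : 'I_m) (c c' : 'I_n) : c != c' ->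
  ip (stateB alpha beta D (r, c)) (stateB alpha beta D (r, c')) = 0.
Proof.
move=> ne.
set dx := domino_of D (r, c); set dy := domino_of D (r, c').
have ne2 : (r, c) != (r, c') by rewrite xpair_eqE eqxx.
case: (boolP ((dx == dy) && dhoriz dx)).
  case/andP => /eqP e hv.
  have hv' : dhoriz dy by rewrite -e.
  move: (hG ne2); rewrite (stateA_h hv) (stateA_h hv') /= ip_ket oner_eq0 /=.
  by move/esym/eqP.
move=> hno; rewrite ipE big1 // => i _.
apply/eqP; rewrite mulf_eq0 conjC_eq0; apply/contraT; rewrite negb_or => /andP [h1 h2].
have e1 := suppB h1; have e2 := suppB h2.
have exy : dx = dy by rewrite /dx /dy -e1 -e2.
move: hno; rewrite exy eqxx /= => hh.
have hx : ~~ dhoriz (domino_of D (r, c)) by rewrite -/dx exy.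
move: h1 h2; rewrite (stateB_v hx) (stateB_v hh).
rewrite !ketE /=; case: (eqVneq i c) => [->|]; last by rewrite eqxx.
by rewrite (negPf ne) eqxx.
Qed.

End St.

Lemma LOCCA_abs (C : numClosedFieldType) (I : finType) p q
  (a : I -> 'cV[C]_p) (b : I -> 'cV[C]_q) :
  oneway_LOCC_A (fun x => kron (a x) (b x)) -> LOCCabs a b.
Proof.
case=> N [Q [R [hQ [sQ [hR [sR hL]]]]]]; exists N, Q, R; do 4 (split => //).
by move=> j k l ne; rewrite -expect_kron; exact: hL.
Qed.

Lemma LOCCB_abs (C : numClosedFieldType) (I : finType) p q
  (a : I -> 'cV[C]_p) (b : I -> 'cV[C]_q) :
  oneway_LOCC_B (fun x => kron (a x) (b x)) -> LOCCabs b a.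
Proof.
case=> N [Q [R [hQ [sQ [hR [sR hL]]]]]]; exists N, Q, R; do 4 (split => //).
by move=> j k l ne; rewrite mulrC -expect_kron; exact: hL.
Qed.


Unset Implicit Arguments.

Theorem mainTheorem8 (C : numClosedFieldType) (m n : nat)
  (hm : (2 <= m)%N) (hn : (2 <= n)%N) (D : seq domino)
  (hD : domino_diagram m n D)
  (alpha : 'I_m -> C) (beta : 'I_n -> C)
  (halpha : forall r, alpha r != 0) (hbeta : forall c, beta c != 0)
  (hG : GA_eq_compl_GB (stateA alpha beta D) (stateB alpha beta D)) :
  ((has (fun d => ~~ dhoriz d && (2 <= dlen d)%N) D) ->
     ~ oneway_LOCC_A (state alpha beta D)) /\
  ((has (fun d => dhoriz d && (2 <= dlen d)%N) D) ->
     ~ oneway_LOCC_B (state alpha beta D)).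
Proof.
have m0 : (0 < m)%N by apply: leq_trans hm.
have n0 : (0 < n)%N by apply: leq_trans hn.
split.
  case/hasP => d dD /andP [hv hs2].
  have hval : valid_domino m n d by case: hD => /allP h _; exact: h.
  move: hval; rewrite /valid_domino (negPf hv) => /and4P [hc hb hs0 hsm].
  pose c : 'I_n := Ordinal hc.
  pose r1 : 'I_m := Ordinal (ltn_pmod (dstart d + 1) m0).
  pose r2 : 'I_m := Ordinal (ltn_pmod (dstart d + 2) m0).
  have dm1 : dom_mem d (r1, c).
    rewrite /dom_mem (negPf hv) /= eqxx /=; apply/hasP; exists 0%N => //.
    by rewrite mem_iota.
  have dm2 : dom_mem d (r2, c).
    rewrite /dom_mem (negPf hv) /= eqxx /=; apply/hasP; exists 1%N => //.
    by rewrite mem_iota.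
  have e1 := dom_uniq hD dD dm1; have e2 := dom_uniq hD dD dm2.
  have hb1 : stateB alpha beta D (r1, c) = ket C c by apply: stateB_v; rewrite e1.
  have hb2 : stateB alpha beta D (r2, c) = ket C c by apply: stateB_v; rewrite e2.
  have hc'n : ((if val c == 0%N then 1 else 0) < n)%N by case: ifP.
  pose c' : 'I_n := Ordinal hc'n.
  have hcc : c' != c.
    by apply/eqP => /(congr1 val) /=; case: (dline d).
  move=> hL.
  apply: (abstract_main (f := fun i => (i, c)) (g := fun i => (i, c'))
            (i1 := r1) (x2 := (r2, c)) hG _ _ _ _ _ _ _ _ _ _ (LOCCA_abs hL)).
  - by move=> i i' [].
  - by move=> i i' [].
  - by move=> i i' ne; apply: orthoA.
  - by move=> i i' ne; apply: orthoA.
  - move=> x; apply/eqP => hx; have := nzA hD alpha hbeta x; by rewrite hx mxE eqxx.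
  - rewrite xpair_eqE eqxx andbT /r1 /r2 -val_eqE /=.
    by rewrite (@mod_uniq _ _ 2 0 1).
  - by rewrite hb1 hb2.
  - by rewrite hb1 ip_ket oner_eq0.
  - move=> i _; rewrite hb1 ip_ketr conjC_eq0; exact: (nzB hD beta halpha (i, c)).
  - by move=> i; rewrite !xpair_eqE (negPf hcc) !andbF.
case/hasP => d dD /andP [hv hs2].
have hval : valid_domino m n d by case: hD => /allP h _; exact: h.
move: hval; rewrite /valid_domino hv => /and4P [hc hb hs0 hsm].
pose r : 'I_m := Ordinal hc.
pose c1 : 'I_n := Ordinal (ltn_pmod (dstart d + 1) n0).
pose c2 : 'I_n := Ordinal (ltn_pmod (dstart d + 2) n0).
have dm1 : dom_mem d (r, c1).
  rewrite /dom_mem hv /= eqxx /=; apply/hasP; exists 0%N => //.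
  by rewrite mem_iota.
have dm2 : dom_mem d (r, c2).
  rewrite /dom_mem hv /= eqxx /=; apply/hasP; exists 1%N => //.
  by rewrite mem_iota.
have e1 := dom_uniq hD dD dm1; have e2 := dom_uniq hD dD dm2.
have ha1 : stateA alpha beta D (r, c1) = ket C r by apply: stateA_h; rewrite e1.
have ha2 : stateA alpha beta D (r, c2) = ket C r by apply: stateA_h; rewrite e2.
have hr'm : ((if val r == 0%N then 1 else 0) < m)%N by case: ifP.
pose r' : 'I_m := Ordinal hr'm.
have hrr : r' != r.
  by apply/eqP => /(congr1 val) /=; case: (dline d).
have Hsym : forall u v, u != v ->
   (ip (stateB alpha beta D u) (stateB alpha beta D v) != 0) =
   (ip (stateA alpha beta D u) (stateA alpha beta D v) == 0).
  by move=> u v ne; rewrite -[X in _ = X]negbK (hG u v ne).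
move=> hL.
apply: (abstract_main (f := fun j => (r, j)) (g := fun j => (r', j))
          (i1 := c1) (x2 := (r, c2)) Hsym _ _ _ _ _ _ _ _ _ _ (LOCCB_abs hL)).
- by move=> i i' [].
- by move=> i i' [].
- by move=> i i' ne; apply: orthoB.
- by move=> i i' ne; apply: orthoB.
- move=> x; apply/eqP => hx; have := nzB hD beta halpha x; by rewrite hx mxE eqxx.
- rewrite xpair_eqE eqxx /= /c1 /c2 -val_eqE /=.
  by rewrite (@mod_uniq _ _ 2 0 1).
- by rewrite ha1 ha2.
- by rewrite ha1 ip_ket oner_eq0.
- move=> i _; rewrite ha1 ip_ketr conjC_eq0; exact: (nzA hD alpha hbeta (r, i)).
- by move=> i; rewrite !xpair_eqE (negPf hrr).
Qed.
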